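(* Let $(\mathbb{P},\le,f)$ be a forcing property for $\mathcal{L}_A$, $G$ a generic set and $\varphi\in\mathcal{L}_A^s(C)$. Then $\varphi^G=\inf_{p\in G}F^w_p(\varphi)$.
   Context: $\mathcal{L}$ is a countable continuous signature; formulas of $\mathcal{L}_{\omega_1,\omega}$ are built from atomic formulas using $\neg$, $\tfrac12$, $\dotplus$, countable conjunctions $\bigwedge$ and $\inf_x$. $\mathcal{L}_A$ is a countable fragment, $C=\{c_i:i<\omega\}$ new constants, $\mathcal{L}_A(C)$ the smallest countable fragment of $\mathcal{L}_{\omega_1,\omega}(C)$ containing $\mathcal{L}_A$, $\mathcal{L}_A^s(C)$ its sentences, $\mathcal{L}_A^{as}(C)$ its atomic sentences, $\mathcal{T}(C)$ closed terms. A forcing property $(\mathbb{P},\le,f)$: poset with $f_p\colon\mathcal{L}_A^{as}(C)\to[0,1]$ such that (1) $p\le q\Rightarrow f_p\le f_q$; (2) for every $p$, $\varepsilon>0$, $\tau,\sigma\in\mathcal{T}(C)$, atomic $\varphi(x)$ there are $q\le p$, $c\in C$ with $f_q(d(\tau,c))<\varepsilon$, $f_q(d(\tau,\sigma))<f_p(d(\sigma,\tau))+\varepsilon$, and if $f_p(d(\tau,\sigma))<\delta_{\varphi,x}(\varepsilon)$ then $f_q(\varphi(\sigma))<f_p(\varphi(\tau))+\varepsilon$. $F_p$: $f_p$ on atomics; $F_p(\neg\varphi)=1-\inf_{q\le p}F_q(\varphi)$; $F_p(\tfrac12\varphi)=\tfrac12F_p(\varphi)$; $F_p(\varphi\dotplus\psi)=\min(F_p(\varphi)+F_p(\psi),1)$;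 $F_p(\bigwedge\Phi)=\inf_{\varphi\in\Phi}F_p(\varphi)$; $F_p(\inf_x\varphi)=\inf_{c\in C}F_p(\varphi(c))$. Weak forcing: $F^w_p(\varphi)=\sup_{q\le p}\inf_{q'\le q}F_{q'}(\varphi)$. $G\subseteq\mathbb{P}$ is generic if nonempty, downward directed, upward closed, and for every sentence $\varphi$ and $r>1$ some $p\in G$ has $F_p(\varphi)+F_p(\neg\varphi)<r$. $\varphi^G:=\inf_{p\in G}F_p(\varphi)$. *)

(* Defs.v *)
From HB Require Import structures.
From mathcomp Require Import all_boot all_order all_algebra.
From mathcomp Require Import boolp classical_sets reals.

Set Implicit Arguments.
Unset Strict Implicit.
Unset Printing Implicit Defensive.

Import Order.TTheory GRing.Theory Num.Theory.
Local Open Scope classical_set_scope.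
Local Open Scope ring_scope.

(* The metric symbol d is built into the syntax.                            *)
Record signature := Signature {
  fsym : countType;
  farity : fsym -> nat;
  rsym : countType;
  rarity : rsym -> nat }.

Section Syntax.
Variable S : signature.

(* Terms of L(C); variables are de Bruijn indices, [tcon i] is the new      *)
(* constant c_i of C = {c_i : i < omega}.                                   *)
Inductive term : Type :=
  | tvar (n : nat)
  | tcon (i : nat)
  | tapp (g : fsym S) (args : 'I_(farity g) -> term).

(* Formulas of L_{omega1,omega}(C): atomic R(t..), d(t,u), negation, 1/2,   *)
(* truncated sum, countable conjunction (a countable family indexed by nat),*)
(* and inf_x (binding de Bruijn index 0).                                   *)
Inductive formula : Type :=
  | fatom (r : rsym S) (args : 'I_(rarity r) -> term)
  | fdist (t u : term)
  | fneg (phi : formula)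
  | fhalf (phi : formula)
  | fplus (phi psi : formula)
  | fconj (Phi : nat -> formula)
  | finf (phi : formula).

Fixpoint tsubst (s : nat -> term) (t : term) : term :=
  match t with
  | tvar n => s n
  | tcon i => tcon i
  | tapp g a => tapp (fun k => tsubst s (a k))
  end.

Definition scons (t : term) (s : nat -> term) : nat -> term :=
  fun n => match n with 0 => t | n'.+1 => s n' end.

Definition tshift (t : term) : term := tsubst (fun n => tvar n.+1) t.

Definition up (s : nat -> term) : nat -> term := scons (tvar 0) (fun n => tshift (s n)).

Fixpoint fsubst (s : nat -> term) (phi : formula) : formula :=
  match phi with
  | fatom r a => fatom (fun k => tsubst s (a k))
  | fdist t u => fdist (tsubst s t) (tsubst s u)
  | fneg phi => fneg (fsubst s phi)
  | fhalf phi => fhalf (fsubst s phi)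
  | fplus phi psi => fplus (fsubst s phi) (fsubst s psi)
  | fconj Phi => fconj (fun n => fsubst s (Phi n))
  | finf phi => finf (fsubst (up s) phi)
  end.

(* phi(t): substitute t for the free variable x (= index 0) *)
Definition inst (phi : formula) (t : term) : formula := fsubst (scons t tvar) phi.

Fixpoint tclosed (k : nat) (t : term) : Prop :=
  match t with
  | tvar n => (n < k)%N
  | tcon _ => True
  | tapp g a => forall j, tclosed k (a j)
  end.

Fixpoint fclosed (k : nat) (phi : formula) : Prop :=
  match phi with
  | fatom r a => forall j, tclosed k (a j)
  | fdist t u => tclosed k t /\ tclosed k u
  | fneg phi | fhalf phi => fclosed k phi
  | fplus phi psi => fclosed k phi /\ fclosed k psi
  | fconj Phi => forall n, fclosed k (Phi n)
  | finf phi => fclosed k.+1 phi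
  end.

Fixpoint tnoC (t : term) : Prop :=
  match t with
  | tvar _ => True
  | tcon _ => False
  | tapp g a => forall j, tnoC (a j)
  end.

Fixpoint fnoC (phi : formula) : Prop :=
  match phi with
  | fatom r a => forall j, tnoC (a j)
  | fdist t u => tnoC t /\ tnoC u
  | fneg phi | fhalf phi => fnoC phi
  | fplus phi psi => fnoC phi /\ fnoC psi
  | fconj Phi => forall n, fnoC (Phi n)
  | finf phi => fnoC phi
  end.

Fixpoint finitary (phi : formula) : Prop :=
  match phi with
  | fatom _ _ | fdist _ _ => True
  | fneg phi | fhalf phi | finf phi => finitary phi
  | fplus phi psi => finitary phi /\ finitary psi
  | fconj _ => False
  end.

Definition is_atomic (phi : formula) : Prop :=
  match phi with fatom _ _ | fdist _ _ => True | _ => False end.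

Definition sentence (phi : formula) : Prop := fclosed 0 phi.

(* Language membership: withC = false means L (no constants of C),        *)
(* withC = true means L(C).                                               *)
Definition in_langT (withC : bool) (t : term) : Prop := withC \/ tnoC t.
Definition in_lang (withC : bool) (phi : formula) : Prop := withC \/ fnoC phi.

Record countable_fragment (withC : bool) (A : formula -> Prop) : Prop := {
  frag_lang : forall phi, A phi -> in_lang withC phi;
  frag_countable : exists e : nat -> formula, forall phi, A phi -> exists n, e n = phi;
  frag_finitary : forall phi, finitary phi -> in_lang withC phi -> A phi;
  frag_neg : forall phi, A phi -> A (fneg phi);
  frag_half : forall phi, A phi -> A (fhalf phi);
  frag_plus : forall phi psi, A phi -> A psi -> A (fplus phi psi);
  frag_inf : forall phi, A phi -> A (finf phi);
  frag_sub_neg : forall phi, A (fneg phi) -> A phi;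
  frag_sub_half : forall phi, A (fhalf phi) -> A phi;
  frag_sub_plus : forall phi psi, A (fplus phi psi) -> A phi /\ A psi;
  frag_sub_conj : forall Phi, A (fconj Phi) -> forall n, A (Phi n);
  frag_sub_inf : forall phi, A (finf phi) -> A phi;
  frag_subst : forall phi (s : nat -> term),
      A phi -> (forall n, in_langT withC (s n)) -> A (fsubst s phi) }.

Definition LAC (LA : formula -> Prop) (phi : formula) : Prop :=
  forall A, countable_fragment true A -> (forall psi, LA psi -> A psi) -> A phi.

Definition LAs (LA : formula -> Prop) (phi : formula) : Prop :=
  LAC LA phi /\ sentence phi.
Definition LAas (LA : formula -> Prop) (phi : formula) : Prop :=
  LAC LA phi /\ sentence phi /\ is_atomic phi.

Definition closed_term (t : term) : Prop := tclosed 0 t.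

End Syntax.

Arguments tvar {S}.
Arguments tcon {S}.

Section Forcing.
Variables (R : realType) (S : signature) (LA : formula S -> Prop).
(* delta phi = delta_{phi,x}, the modulus of uniform continuity of the      *)
(* atomic formula phi(x) in its variable x                                  *)
Variable delta : formula S -> R -> R.
Variables (P : Type) (le : P -> P -> Prop) (f : P -> formula S -> R).

Record forcing_property : Prop := {
  fp_refl : forall p, le p p;
  fp_trans : forall p q r, le p q -> le q r -> le p r;
  fp_antisym : forall p q, le p q -> le q p -> p = q;
  fp_range : forall p a, LAas LA a -> 0 <= f p a <= 1;
  fp_mono : forall p q a, LAas LA a -> le p q -> f p a <= f q a;
  fp_dense : forall p (eps : R) (tau sigma : term S) (phi : formula S),
      0 < eps -> closed_term tau -> closed_term sigma ->
      is_atomic phi -> fclosed 1 phi -> LAC LA phi ->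
      exists q, exists c : nat,
        le q p /\
        f q (fdist tau (tcon c)) < eps /\
        f q (fdist tau sigma) < f p (fdist sigma tau) + eps /\
        (f p (fdist tau sigma) < delta phi eps ->
           f q (inst phi sigma) < f p (inst phi tau) + eps) }.

Definition below (p : P) : set P := [set q | le q p].

(* F evaluated under an environment rho of closed terms for the free       *)
(* variables; on a sentence phi, F_p(phi) := Fenv phi tvar p.  In the       *)
(* inf_x clause, Fenv phi (c .: rho) is F_p of phi(c).                      *)
Fixpoint Fenv (phi : formula S) (rho : nat -> term S) : P -> R :=
  match phi with
  | fatom r a => fun p => f p (fatom (fun k => tsubst rho (a k)))
  | fdist t u => fun p => f p (fdist (tsubst rho t) (tsubst rho u))
  | fneg phi => fun p => 1 - inf [set Fenv phi rho q | q in below p]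
  | fhalf phi => fun p => Fenv phi rho p / 2
  | fplus phi psi => fun p => Num.min (Fenv phi rho p + Fenv psi rho p) 1
  | fconj Phi => fun p => inf [set Fenv (Phi n) rho p | n in [set: nat]]
  | finf phi => fun p => inf [set Fenv phi (scons (tcon c) rho) p | c in [set: nat]]
  end.

Definition F (p : P) (phi : formula S) : R := Fenv phi tvar p.

Definition Fw (p : P) (phi : formula S) : R :=
  sup [set inf [set F q' phi | q' in below q] | q in below p].

Definition generic (G : set P) : Prop :=
  (exists p, G p) /\
  (forall p q, G p -> G q -> exists r, G r /\ le r p /\ le r q) /\
  (forall p q, G p -> le p q -> G q) /\
  (forall phi (r : R), LAs LA phi -> 1 < r ->
     exists p, G p /\ F p phi + F p (fneg phi) < r).

Definition valG (G : set P) (phi : formula S) : R := inf [set F p phi | p in G].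

End Forcing.

(* Main.v *)
Require Import Defs.
From HB Require Import structures.
From mathcomp Require Import all_boot all_order all_algebra.
From mathcomp Require Import boolp classical_sets reals.
Import Order.TTheory GRing.Theory Num.Theory.
Local Open Scope classical_set_scope.
Local Open Scope ring_scope.

Lemma tsubst_closed {S : signature} {t : term S} : forall {k} {rho : nat -> term S},
  tclosed k t -> (forall n, (n < k)%N -> tclosed 0 (rho n)) -> tclosed 0 (tsubst rho t).
Proof.
induction t as [n|i|g a IH] => k rho /= Ht Hr; first exact: Hr.
- by [].
- by move=> j; apply: (IH j k).
Qed.

Lemma LAC_subst {S : signature} {LA : formula S -> Prop} {phi} s :
  LAC LA phi -> LAC LA (fsubst s phi).
Proof.
move=> H A HA HL; apply: (frag_subst HA); first exact: H.
by move=> n; left.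
Qed.

Lemma inf_le_mem {R : realType} {E : set R} {y} :
  E y -> (forall z, E z -> 0 <= z) -> inf E <= y.
Proof.
move=> Ey H; apply: ge_inf => //; exists 0 => z Ez; exact: H.
Qed.

Lemma inf_01 {R : realType} {E : set R} :
  E !=set0 -> (forall z, E z -> 0 <= z <= 1) -> 0 <= inf E <= 1.
Proof.
move=> [y Ey] H; apply/andP; split.
- by apply: lb_le_inf; [exists y | move=> z /H /andP[]].
- have h0 : forall z, E z -> 0 <= z by move=> z /H /andP[].
  have := inf_le_mem Ey h0; case/andP: (H _ Ey) => _ h1 h2.
  exact: le_trans h2 h1.
Qed.

From mathcomp Require Import lra.

Section LACsub.
Lemma LAC_neg {S : signature} {LA : formula S -> Prop} {phi} : LAC LA (fneg phi) -> LAC LA phi.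
Proof. by move=> H A HA HL; apply: (frag_sub_neg HA); apply: H. Qed.
Lemma LAC_negI {S : signature} {LA : formula S -> Prop} {phi} : LAC LA phi -> LAC LA (fneg phi).
Proof. by move=> H A HA HL; apply: (frag_neg HA); apply: H. Qed.
Lemma LAC_half {S : signature} {LA : formula S -> Prop} {phi} : LAC LA (fhalf phi) -> LAC LA phi.
Proof. by move=> H A HA HL; apply: (frag_sub_half HA); apply: H. Qed.
Lemma LAC_plusl {S : signature} {LA : formula S -> Prop} {phi psi} : LAC LA (fplus phi psi) -> LAC LA phi.
Proof. by move=> H A HA HL; case: (frag_sub_plus HA (H A HA HL)). Qed.
Lemma LAC_plusr {S : signature} {LA : formula S -> Prop} {phi psi} : LAC LA (fplus phi psi) -> LAC LA psi.
Proof. by move=> H A HA HL; case: (frag_sub_plus HA (H A HA HL)). Qed.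
Lemma LAC_conj {S : signature} {LA : formula S -> Prop} {Phi} n : LAC LA (fconj Phi) -> LAC LA (Phi n).
Proof. by move=> H A HA HL; apply: (frag_sub_conj HA); apply: H. Qed.
Lemma LAC_inf {S : signature} {LA : formula S -> Prop} {phi} : LAC LA (finf phi) -> LAC LA phi.
Proof. by move=> H A HA HL; apply: (frag_sub_inf HA); apply: H. Qed.
End LACsub.

Lemma scons_closed {S : signature} {k} {rho : nat -> term S} c :
  (forall n, (n < k)%N -> closed_term (rho n)) ->
  forall n, (n < k.+1)%N -> closed_term (scons (tcon c) rho n).
Proof. by move=> H [|n] //= /H. Qed.

Lemma Fenv_range {R : realType} {S : signature} {LA : formula S -> Prop}
    {delta : formula S -> R -> R} {P : Type} {le : P -> P -> Prop} {f : P -> formula S -> R}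
    (FP : forcing_property LA delta le f) (phi : formula S) :
  forall (k : nat) (rho : nat -> term S) (p : P), LAC LA phi -> Defs.fclosed k phi ->
  (forall n, (n < k)%N -> closed_term (rho n)) -> 0 <= Fenv le f phi rho p <= 1.
Proof.
elim: phi => [r a|t u|phi IH|phi IH|phi IH psi IH'|Phi IH|phi IH] k rho p HL Hc Hr /=.
- apply: (fp_range FP); split; first exact (LAC_subst rho HL).
  split=> //= j; exact: (tsubst_closed (Hc j) Hr).
- apply: (fp_range FP); split; first exact (LAC_subst rho HL).
  case: Hc => Ht Hu.
  by split=> //=; split; [exact: (tsubst_closed Ht Hr)|exact: (tsubst_closed Hu Hr)].
- have /andP[h1 h2] : 0 <= inf [set Fenv le f phi rho q | q in below le p] <= 1.
    apply: inf_01.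
    + by exists (Fenv le f phi rho p); exists p => //; apply: (fp_refl FP).
    + by move=> z [q _ <-]; apply: (IH k) => //; apply: LAC_neg.
  apply/andP; split; lra.
- have := IH k rho p (LAC_half HL) Hc Hr; case/andP=> h1 h2; apply/andP; split; lra.
- have := IH k rho p (LAC_plusl HL) Hc.1 Hr; case/andP=> h1 h2.
  have := IH' k rho p (LAC_plusr HL) Hc.2 Hr; case/andP=> h3 h4.
  rewrite /Num.min /Order.min; case: ltP => h; apply/andP; split; lra.
- apply: inf_01; first by exists (Fenv le f (Phi 0%N) rho p); exists 0%N.
  by move=> z [n _ <-]; apply: (IH n k) => //; apply: LAC_conj.
- apply: inf_01; first by exists (Fenv le f phi (scons (tcon 0%N) rho) p); exists 0%N.
  move=> z [c _ <-]; apply: (IH k.+1) => //; first exact: LAC_inf.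
  exact: scons_closed.
Qed.

Lemma Fenv_mono {R : realType} {S : signature} {LA : formula S -> Prop}
    {delta : formula S -> R -> R} {P : Type} {le : P -> P -> Prop} {f : P -> formula S -> R}
    (FP : forcing_property LA delta le f) (phi : formula S) :
  forall (k : nat) (rho : nat -> term S) (p q : P), LAC LA phi -> Defs.fclosed k phi ->
  (forall n, (n < k)%N -> closed_term (rho n)) -> le q p ->
  Fenv le f phi rho q <= Fenv le f phi rho p.
Proof.
have Rg := Fenv_range FP.
elim: phi => [r a|t u|phi IH|phi IH|phi IH psi IH'|Phi IH|phi IH] k rho p q HL Hc Hr Hqp /=.
- apply: (fp_mono FP) => //; split; first exact (LAC_subst rho HL).
  split=> //= j; exact: (tsubst_closed (Hc j) Hr).
- apply: (fp_mono FP) => //; split; first exact (LAC_subst rho HL).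
  case: Hc => Ht Hu.
  by split=> //=; split; [exact: (tsubst_closed Ht Hr)|exact: (tsubst_closed Hu Hr)].
- suff : inf [set Fenv le f phi rho q0 | q0 in below le p] <=
         inf [set Fenv le f phi rho q0 | q0 in below le q] by move=> h; lra.
  apply: lb_le_inf.
    by exists (Fenv le f phi rho q); exists q => //; apply: (fp_refl FP).
  move=> z [q' Hq' <-]; apply: inf_le_mem.
    by exists q' => //; apply: (fp_trans FP) Hq' Hqp.
  move=> z' [q'' _ <-].
  by case/andP: (Rg phi k rho q'' (LAC_neg HL) Hc Hr).
- have := IH k rho p q (LAC_half HL) Hc Hr Hqp => h; lra.
- have := IH k rho p q (LAC_plusl HL) Hc.1 Hr Hqp => h1.
  have := IH' k rho p q (LAC_plusr HL) Hc.2 Hr Hqp => h2.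
  rewrite /Num.min /Order.min; case: ltP => h3; case: ltP => h4; lra.
- apply: lb_le_inf; first by exists (Fenv le f (Phi 0%N) rho p); exists 0%N.
  move=> z [n _ <-].
  have h1 := IH n k rho p q (LAC_conj n HL) (Hc n) Hr Hqp.
  suff h2 : inf [set Fenv le f (Phi n0) rho q | n0 in [set: nat]] <= Fenv le f (Phi n) rho q by lra.
  apply: inf_le_mem; first by exists n.
  move=> z' [m _ <-].
  by case/andP: (Rg (Phi m) k rho q (LAC_conj m HL) (Hc m) Hr).
- apply: lb_le_inf; first by exists (Fenv le f phi (scons (tcon 0%N) rho) p); exists 0%N.
  move=> z [c _ <-].
  have h1 := IH k.+1 (scons (tcon c) rho) p q (LAC_inf HL) Hc (scons_closed c Hr) Hqp.
  suff h2 : inf [set Fenv le f phi (scons (tcon c0) rho) q | c0 in [set: nat]] <= Fenv le f phi (scons (tcon c) rho) q by lra.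
  apply: inf_le_mem; first by exists c.
  move=> z' [m _ <-].
  by case/andP: (Rg phi k.+1 (scons (tcon m) rho) q (LAC_inf HL) Hc (scons_closed m Hr)).
Qed.

Theorem lemma2p13 (R : realType) (S : signature) (LA : formula S -> Prop)
    (delta : formula S -> R -> R)
    (P : Type) (le : P -> P -> Prop) (f : P -> formula S -> R)
    (G : set P) (phi : formula S) :
  countable_fragment false LA ->
  (forall psi (eps : R), 0 < eps -> 0 < delta psi eps) ->
  forcing_property LA delta le f ->
  generic LA le f G ->
  LAs LA phi ->
  valG le f G phi = inf [set Fw le f p phi | p in G].
Proof.
move=> _ _ FP [[p0 Gp0] [Gdir [_ Ggen]]] [HL Hc].
have Hr : forall n, (n < 0)%N -> closed_term (@tvar S n) by [].
have rg : forall p, 0 <= F le f p phi <= 1.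
  by move=> p; exact: (Fenv_range FP phi 0 tvar p HL Hc Hr).
have mono : forall p q, le q p -> F le f q phi <= F le f p phi.
  by move=> p q; exact: (Fenv_mono FP phi 0 tvar p q HL Hc Hr).
have monoN : forall p q, le q p -> F le f q (fneg phi) <= F le f p (fneg phi).
  by move=> p q; exact: (Fenv_mono FP (fneg phi) 0 tvar p q (LAC_negI HL) Hc Hr).
pose I q := inf [set F le f q' phi | q' in below le q].
have I01 : forall q, 0 <= I q <= 1.
  move=> q; apply: inf_01; first by exists (F le f q phi); exists q => //; apply: (fp_refl FP).
  by move=> z [q' _ <-].
have IF : forall q, I q <= F le f q phi.
  move=> q; apply: inf_le_mem; first by exists q => //; apply: (fp_refl FP).
  by move=> z [q' _ <-]; case/andP: (rg q').
have FN : forall q, F le f q (fneg phi) = 1 - I q by [].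
have FwE : forall p, Fw le f p phi = sup [set I q | q in below le p] by [].
have FwF : forall p, Fw le f p phi <= F le f p phi.
  move=> p; rewrite FwE; apply: ge_sup; first by exists (I p); exists p => //; apply: (fp_refl FP).
  move=> z [q Hq <-]; have := IF q; have := mono p q Hq; lra.
have IFw : forall p q, le q p -> I q <= Fw le f p phi.
  move=> p q Hq; rewrite FwE; apply: ub_le_sup; last by exists q.
  by exists 1 => z [q' _ <-]; case/andP: (I01 q').
have Fw0 : forall p, 0 <= Fw le f p phi.
  move=> p; have := IFw p p (fp_refl FP p); case/andP: (I01 p) => h _ h'; lra.
apply/le_anti/andP; split.
- apply: lb_le_inf; first by exists (Fw le f p0 phi); exists p0.
  move=> z [p Gp <-]; apply/ler_addgt0Pr => e e0.
  have [r0 [Gr0 Hr0]] := Ggen phi (1 + e) (conj HL Hc) ltac:(by rewrite ltrDl).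
  have [s [Gs [Hsp Hsr]]] := Gdir p r0 Gp Gr0.
  have h1 : valG le f G phi <= F le f s phi.
    apply: inf_le_mem; first by exists s.
    by move=> z' [q _ <-]; case/andP: (rg q).
  have h2 := mono r0 s Hsr.
  have h3 := monoN r0 s Hsr.
  have h4 := IFw p s Hsp.
  rewrite FN in Hr0 h3; rewrite FN in h3.
  rewrite /valG in h1 *; lra.
- apply: lb_le_inf; first by exists (F le f p0 phi); exists p0.
  move=> z [p Gp <-].
  have h1 : inf [set Fw le f p phi | p in G] <= Fw le f p phi.
    apply: inf_le_mem; first by exists p.
    by move=> z' [q _ <-].
  have := FwF p; lra.
Qed.
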